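(* Assume (A2) and (A5). Then there exists $c>0$ such that, $\mathbb P$-almost surely, \[ \sup_{n\geqslant1}\sup_{x,x'\in\mathbb S_+^{d-1}:x\neq x'}\frac{|S_n^x-S_n^{x'}|}{\mathbf d(x,x')}\leqslant c \quad\text{and}\quad \sup_{n\geqslant1}\sup_{x,x'\in\mathbb S_+^{d-1}:x\neq x'}\frac{|\min_{1\leqslant j\leqslant n}S_j^x-\min_{1\leqslant j\leqslant n}S_j^{x'}|}{\mathbf d(x,x')}\leqslant c. \]
   Context: Let $d\geqslant2$, $|x|=\sum_i|\langle x,e_i\rangle|$, $\mathbb S_+^{d-1}=\{x\in\mathbb R_+^d:|x|=1\}$. $\mathcal M_+$: $d\times d$ allowable matrices (nonnegative, each row and column has a positive entry). $\|g\|=\sup_{x\in\mathbb S_+^{d-1}}|gx|$, $\iota(g)=\inf_{x\in\mathbb S_+^{d-1}}|gx|$, $N(g)=\max\{\|g\|,\iota(g)^{-1}\}$, $g^{i,j}$ entries. $(g_n)$ i.i.d. with law $\mu$; $S_n^x=\log|g_n\cdots g_1x|$. (A2) $\int(\log N(g))^{2+\delta}\mu(dg)<\infty$ for some $\delta>0$. (A5) there is $\varkappa>1$ with $\max_{i,j}g^{i,j}/\min_{i,j}g^{i,j}\leqslant\varkappa$ for $\mu$-a.e. $g$. Hilbert metric $\mathbf d(x,x')=\frac{1-m(x,x')m(x',x)}{1+m(x,x')m(x',x)}$, $m(x,x')=\min_i\langle x,e_i\rangle/\langle x',e_i\rangle$. *)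

(* Defs.v *)
From HB Require Import structures.
From mathcomp Require Import all_boot all_order all_algebra.
From mathcomp Require Import all_classical all_reals all_analysis.
Set Implicit Arguments. Unset Strict Implicit. Unset Printing Implicit Defensive.
Import Order.TTheory GRing.Theory Num.Theory.
Local Open Scope classical_set_scope.
Local Open Scope ring_scope.

Section Defs.
Variables (R : realType) (d : nat).

Definition l1norm (x : 'cV[R]_d) : R := \sum_(i < d) `|x i ord0|.

Definition simplex : set 'cV[R]_d :=
  [set x : 'cV[R]_d | (forall i, 0 <= x i ord0) /\ l1norm x = 1].

Definition allowable (g : 'M[R]_d) : Prop :=
  (forall i j, 0 <= g i j) /\
  (forall i, exists j, 0 < g i j) /\ (forall j, exists i, 0 < g i j).

Definition opnorm (g : 'M[R]_d) : R := sup [set l1norm (g *m x) | x in simplex].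
Definition iota (g : 'M[R]_d) : R := inf [set l1norm (g *m x) | x in simplex].
Definition Nmat (g : 'M[R]_d) : R := Num.max (opnorm g) (iota g)^-1.

(* (A5) condition for a single matrix: max_{i,j} g^{ij} / min_{i,j} g^{ij} <= kappa
   (with min_{i,j} g^{ij} > 0, so that the ratio is finite) *)
Definition A5_mat (kappa : R) (g : 'M[R]_d) : Prop :=
  (forall i j, 0 < g i j) /\ (forall i j i' j', g i j <= kappa * g i' j').

(* m(x,x') = min_i x_i / x'_i, with the convention a/0 = +oo, i.e. the minimum
   is taken over the coordinates where x'_i > 0 (= sup{l >= 0 : l x' <= x}) *)
Definition mH (x x' : 'cV[R]_d) : R :=
  inf [set x i ord0 / x' i ord0 | i in [set i | 0 < x' i ord0]].

Definition hilbert (x x' : 'cV[R]_d) : R :=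
  (1 - mH x x' * mH x' x) / (1 + mH x x' * mH x' x).

Variables (dT : measure_display) (T : measurableType dT) (P : probability T R).
Variable g : nat -> T -> 'M[R]_d.
(* g n is the paper's g_{n+1} *)

Definition mx_event (n : nat) (A : 'I_d -> 'I_d -> set R) : set T :=
  [set w | forall i j, A i j (g n w i j)].

Definition entries_measurable : Prop :=
  forall n i j, measurable_fun setT (fun w => g n w i j).

(* mutual independence of the sequence (g_n), tested on the measurable
   rectangles of R^{d x d} (a pi-system generating the Borel sets) *)
Definition mx_independent : Prop :=
  forall (s : seq nat) (A : nat -> 'I_d -> 'I_d -> set R),
    uniq s -> (forall n i j, measurable (A n i j)) ->
    P [set w | forall n, n \in s -> mx_event n (A n) w] =
    \big[*%E/1%E]_(n <- s) P (mx_event n (A n)).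

Definition mx_identically_distributed : Prop :=
  forall (n : nat) (A : 'I_d -> 'I_d -> set R),
    (forall i j, measurable (A i j)) ->
    P (mx_event n A) = P (mx_event 0 A).

(* G_n = g_n ... g_1 (here g (n-1) *m ... *m g 0), G_0 = 1 *)
Fixpoint Gprod (n : nat) (w : T) : 'M[R]_d :=
  match n with
  | 0 => 1%:M
  | n'.+1 => g n' w *m Gprod n' w
  end.

Definition Sn (n : nat) (w : T) (x : 'cV[R]_d) : R := ln (l1norm (Gprod n w *m x)).

Definition minS (n : nat) (w : T) (x : 'cV[R]_d) : R :=
  \big[Num.min/Sn 1 w x]_(1 <= j < n.+1) Sn j w x.

End Defs.

(* Main.v *)
Require Import Defs.
From HB Require Import structures.
From mathcomp Require Import all_boot all_order all_algebra.
From mathcomp Require Import all_classical all_reals all_analysis.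
From mathcomp Require Import lra.
Import Order.TTheory GRing.Theory Num.Theory.
Local Open Scope classical_set_scope.
Local Open Scope ring_scope.
Set Implicit Arguments. Unset Strict Implicit.

Section Det.
Variables (R : realType) (d : nat).

Lemma mono_step (M : 'M[R]_d) (y y' : 'cV[R]_d) (t : R) :
  (forall i j, 0 <= M i j) -> 0 <= t ->
  (forall i, 0 <= y' i ord0) -> (forall i, t * y' i ord0 <= y i ord0) ->
  (forall i, 0 <= (M *m y') i ord0) /\ (forall i, t * (M *m y') i ord0 <= (M *m y) i ord0).
Proof.
move=> M0 t0 y0 yy; split=> i; rewrite !mxE.
  by apply: sumr_ge0 => j _; apply: mulr_ge0.
rewrite mulr_sumr; apply: ler_sum => j _; rewrite mulrCA.
by apply: ler_wpM2l.
Qed.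

Lemma l1_ge (y y' : 'cV[R]_d) (t : R) :
  (forall i, 0 <= y' i ord0) -> (forall i, t * y' i ord0 <= y i ord0) ->
  t * l1norm y' <= l1norm y.
Proof.
move=> y0 yy; rewrite /l1norm mulr_sumr; apply: ler_sum => i _.
rewrite ger0_norm //; exact: le_trans (yy i) (ler_norm _).
Qed.

Lemma l1_ge0 (y : 'cV[R]_d) : 0 <= l1norm y.
Proof. by apply: sumr_ge0 => i _. Qed.

Lemma simplex_sum (x : 'cV[R]_d) : simplex x -> \sum_(i < d) x i ord0 = 1.
Proof.
move=> [x0 <-]; rewrite /l1norm; apply: eq_bigr => i _; by rewrite ger0_norm.
Qed.

Lemma simplex_pos (x : 'cV[R]_d) : simplex x -> exists i, 0 < x i ord0.
Proof.
move=> hx; have [x0 _] := hx.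
apply/not_existsP => H.
have : \sum_(i < d) x i ord0 = 0.
  apply: big1 => i _; apply/eqP; rewrite eq_le x0 andbT; rewrite leNgt; apply/negP; exact: H.
by rewrite simplex_sum // => /eqP; rewrite oner_eq0.
Qed.

Lemma mH_props (x x' : 'cV[R]_d) : simplex x -> simplex x' ->
  [/\ 0 <= mH x x', mH x x' <= 1 & forall i, mH x x' * x' i ord0 <= x i ord0].
Proof.
move=> hx hx'; have [x0 _] := hx; have [x'0 _] := hx'.
set S := [set x i ord0 / x' i ord0 | i in [set i | 0 < x' i ord0]].
have hlb : lbound S 0.
  by move=> _ [i /= hi <-]; apply: divr_ge0 => //; exact: ltW.
have hne : S !=set0.
  by have [i hi] := simplex_pos hx'; exists (x i ord0 / x' i ord0); exists i.
have m0 : 0 <= mH x x' by apply: lb_le_inf.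
have hle : forall i, mH x x' * x' i ord0 <= x i ord0.
  move=> i; have [hi|] := ltP 0 (x' i ord0).
    have : mH x x' <= x i ord0 / x' i ord0.
      by apply: ge_inf; [exists 0 | exists i].
    by rewrite ler_pdivlMr.
  move=> hi; have -> : x' i ord0 = 0 by apply/eqP; rewrite eq_le hi x'0.
  by rewrite mulr0.
split => //.
have := l1_ge x'0 hle.
by case: hx => _ ->; case: hx' => _ ->; rewrite mulr1.
Qed.

Lemma kappa_step (M : 'M[R]_d) (k : R) (x x' : 'cV[R]_d) :
  A5_mat k M -> 0 < k -> simplex x -> simplex x' ->
  forall i, k^-1 * (M *m x') i ord0 <= (M *m x) i ord0.
Proof.
move=> [Mp Mk] k0 hx hx' i.
have hb : forall j, k^-1 * (M *m x') i ord0 <= M i j.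
  move=> j; rewrite ler_pdivrMl // mxE.
  apply: (@le_trans _ _ (\sum_(l < d) (k * M i j) * x' l ord0)).
    apply: ler_sum => l _; apply: ler_wpM2r; first by case: hx'.
    exact: Mk.
  by rewrite -mulr_sumr simplex_sum // mulr1.
rewrite [X in _ <= X]mxE.
rewrite -[X in X <= _]mulr1 -(simplex_sum hx) mulr_sumr.
apply: ler_sum => j _; apply: ler_wpM2r; first by case: hx.
exact: hb.
Qed.

End Det.

Section Num.
Variable R : realType.

Lemma ln_le_sub1 (y : R) : 0 < y -> ln y <= y - 1.
Proof.
move=> y0; have := @le_ln1Dx R (y - 1).
rewrite addrCA subrr addr0; apply; lra.
Qed.

Lemma num_bound (a b k : R) : 0 <= a -> a <= 1 -> 0 <= b -> b <= 1 -> 1 < k ->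
  - ln (Num.max a k^-1) <= (4 + 3 * ln k) * ((1 - a * b) / (1 + a * b)).
Proof.
move=> a0 a1 b0 b1 k1.
have lk : 0 < ln k by apply: ln_gt0.
set p := a * b.
have p0 : 0 <= p by apply: mulr_ge0.
have p1 : p <= a by rewrite /p -[X in _ <= X]mulr1; apply: ler_wpM2l.
set D := (1 - p) / (1 + p).
have hD : D * (1 + p) = 1 - p by rewrite /D mulfVK //; apply/negP => /eqP; lra.
have D0 : 0 <= D by apply: divr_ge0; lra.
have [hp|hp] := leP (2^-1) p.
  have ap : 0 < a by lra.
  have pp : 0 < p by lra.
  have h1 : - ln (Num.max a k^-1) <= - ln p.
    rewrite lerN2 ler_ln ?posrE //; last by rewrite lt_max ap.
    by apply: le_trans p1 _; rewrite le_max lexx.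
  have h2 : - ln p <= p^-1 - 1.
    by rewrite -lnV ?posrE //; apply: ln_le_sub1; rewrite invr_gt0.
  have h3 : p^-1 - 1 <= 4 * D.
    have -> : p^-1 - 1 = (1 - p) / p by rewrite mulrBl mul1r divff //; lra.
    rewrite ler_pdivrMr //.
    have : 0 <= D * (3 * p - 1) by apply: mulr_ge0; lra.
    nra.
  have h4 : 0 <= 3 * ln k * D by apply: mulr_ge0 => //; apply: mulr_ge0; lra.
  lra.
have ki : 0 < k^-1 by rewrite invr_gt0; lra.
have mpos : 0 < Num.max a k^-1 by rewrite lt_max ki orbT.
have h1 : - ln (Num.max a k^-1) <= ln k.
  have e : ln (Num.max a k^-1) >= ln (k^-1).
    by rewrite ler_ln ?posrE // le_max lexx orbT.
  by rewrite lnV ?posrE in e; lra.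
have D3 : 1 <= 3 * D by nra.
have h2 : ln k <= 3 * ln k * D.
  have : 0 <= ln k * (3 * D - 1) by apply: mulr_ge0; lra.
  nra.
have h4 : 0 <= 4 * D by lra.
lra.
Qed.

Lemma ln_diff (u v m1 m2 L : R) : 0 <= u -> 0 <= v -> 0 < m1 -> 0 < m2 ->
  m1 * v <= u -> m2 * u <= v -> - ln m1 <= L -> - ln m2 <= L -> 0 <= L ->
  `|ln u - ln v| <= L.
Proof.
move=> u0 v0 m10 m20 h1 h2 l1 l2 L0.
have [u00|upos] := eqVneq u 0.
  have -> : v = 0 by subst u; apply/eqP; rewrite eq_le v0 andbT -(pmulr_rle0 _ m10).
  by rewrite u00 subrr normr0.
have up : 0 < u by rewrite lt_def upos.
have vp : 0 < v.
  by apply: lt_le_trans h2; apply: mulr_gt0.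
have e1 : ln m1 + ln v <= ln u by rewrite -lnM ?posrE // ?mulr_gt0 // ler_ln ?posrE // mulr_gt0.
have e2 : ln m2 + ln u <= ln v by rewrite -lnM ?posrE // ?mulr_gt0 // ler_ln ?posrE // mulr_gt0.
rewrite ler_norml; apply/andP; split; lra.
Qed.

Lemma min_diff (a b c e L : R) : `|a - b| <= L -> `|c - e| <= L ->
  `|Num.min a c - Num.min b e| <= L.
Proof.
rewrite !ler_norml => /andP[h1 h2] /andP[h3 h4].
have [q1|q1] := leP a c; have [q2|q2] := leP b e;
  rewrite ?(min_l q1) ?(min_r (ltW q1)) ?(min_l q2) ?(min_r (ltW q2));
  apply/andP; split; lra.
Qed.

End Num.

Section Prod.
Variables (R : realType) (d : nat) (dT : measure_display) (T : measurableType dT).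
Variables (g : nat -> T -> 'M[R]_d) (w : T).
Hypothesis gnn : forall k i j, 0 <= g k w i j.

Lemma Gprod_prop (x x' : 'cV[R]_d) (t : R) m k : 0 <= t ->
  (forall i, 0 <= (Gprod g m w *m x') i ord0) ->
  (forall i, t * (Gprod g m w *m x') i ord0 <= (Gprod g m w *m x) i ord0) ->
  (forall i, 0 <= (Gprod g (k + m) w *m x') i ord0) /\
  (forall i, t * (Gprod g (k + m) w *m x') i ord0 <= (Gprod g (k + m) w *m x) i ord0).
Proof.
move=> t0 h1 h2; elim: k => [|k [IH1 IH2]] //.
rewrite addSn /= -!mulmxA; exact: mono_step.
Qed.

Lemma Gprod1 (x : 'cV[R]_d) : Gprod g 1 w *m x = g 0%N w *m x.
Proof. by rewrite /= mulmx1. Qed.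

Lemma Gprod0 (x : 'cV[R]_d) : Gprod g 0 w *m x = x.
Proof. by rewrite /= mul1mx. Qed.

Lemma Sn_bound (k : R) (n : nat) (x x' : 'cV[R]_d) : 1 < k -> A5_mat k (g 0%N w) ->
  (1 <= n)%N -> simplex x -> simplex x' ->
  `|Sn g n w x - Sn g n w x'| <= (4 + 3 * ln k) * hilbert x x'.
Proof.
move=> k1 hA n1 hx hx'.
have [a0 a1 ha] := mH_props hx hx'.
have [b0 b1 hb] := mH_props hx' hx.
have x0 := hx.1; have x'0 := hx'.1.
have k0 : 0 < k by lra.
have ki : 0 < k^-1 by rewrite invr_gt0.
have hn : n = ((n - 1) + 1)%N by rewrite subnK.
have Pa : forall (y y' : 'cV[R]_d) (c : R), 0 <= c -> (forall i, 0 <= y' i ord0) ->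
    (forall i, c * y' i ord0 <= y i ord0) ->
    c * l1norm (Gprod g n w *m y') <= l1norm (Gprod g n w *m y).
  move=> y y' c c0 y0 hyy.
  have [] := @Gprod_prop y y' c 0 n c0; rewrite ?Gprod0 // addn0.
  exact: l1_ge.
have Pk : forall (y y' : 'cV[R]_d), simplex y -> simplex y' ->
    k^-1 * l1norm (Gprod g n w *m y') <= l1norm (Gprod g n w *m y).
  move=> y y' hy hy'.
  have [] := @Gprod_prop y y' k^-1 1 (n - 1) (ltW ki); rewrite ?Gprod1.
  - move=> i; rewrite mxE; apply: sumr_ge0 => j _; apply: mulr_ge0 => //.
    exact: hy'.1.
  - exact: kappa_step.
  rewrite -hn; exact: l1_ge.
set u := l1norm (Gprod g n w *m x).
set v := l1norm (Gprod g n w *m x').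
have m1v : Num.max (mH x x') k^-1 * v <= u.
  have [h|h] := leP (mH x x') k^-1.
    by apply: Pk.
  by apply: Pa.
have m2u : Num.max (mH x' x) k^-1 * u <= v.
  have [h|h] := leP (mH x' x) k^-1.
    by apply: Pk.
  by apply: Pa.
rewrite /Sn -/u -/v.
apply: (ln_diff (l1_ge0 _) (l1_ge0 _) _ _ m1v m2u).
- by rewrite lt_max ki orbT.
- by rewrite lt_max ki orbT.
- exact: num_bound.
- rewrite /hilbert [mH x x' * _]mulrC; exact: num_bound.
- apply: mulr_ge0.
    have : 0 < ln k by apply: ln_gt0.
    lra.
  rewrite /hilbert; apply: divr_ge0.
    have : mH x x' * mH x' x <= 1 by apply: mulr_ile1.
    lra.
  have : 0 <= mH x x' * mH x' x by apply: mulr_ge0.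
  lra.
Qed.

End Prod.

Lemma minS_bound (R : realType) (d : nat) (dT : measure_display) (T : measurableType dT)
  (g : nat -> T -> 'M[R]_d) (w : T) (x x' : 'cV[R]_d) (L : R) n :
  (forall j, (1 <= j)%N -> `|Sn g j w x - Sn g j w x'| <= L) ->
  `|minS g n w x - minS g n w x'| <= L.
Proof.
move=> H; rewrite /minS !big_seq.
apply: (big_ind2 (fun a b => `|a - b| <= L)) => [|a b c e|j]; first exact: H.
  exact: min_diff.
by rewrite mem_index_iota => /andP[j1 _]; exact: H.
Qed.

Lemma meas_forall_seq d (T : measurableType d) (I : eqType) (s : seq I) (Q : I -> set T) :
  (forall i, measurable (Q i)) -> measurable [set w | forall i, i \in s -> Q i w].
Proof.
move=> mQ; elim: s => [|x s IH].
  have -> : [set w | forall i, i \in [::] -> Q i w] = setT by apply/seteqP; split => w //=.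
  exact: measurableT.
have -> : [set w | forall i, i \in x :: s -> Q i w] =
    Q x `&` [set w | forall i, i \in s -> Q i w].
  apply/seteqP; split=> w /=.
    move=> H; split; first by apply: H; rewrite mem_head.
    by move=> i hi; apply: H; rewrite in_cons hi orbT.
  by move=> [h1 h2] i; rewrite in_cons => /orP[/eqP->|]//; exact: h2.
exact: measurableI.
Qed.

Unset Implicit Arguments.
Set Strict Implicit.

Theorem lemma4p3 (R : realType) (d : nat) (dT : measure_display)
  (T : measurableType dT) (P : probability T R) (g : nat -> T -> 'M[R]_d) :
  (2 <= d)%N ->
  entries_measurable g ->
  mx_independent P g ->
  mx_identically_distributed P g ->
  (* mu is supported on allowable matrices *)
  {ae P, forall w, allowable (g 0%N w)} ->
  (* (A2) *)
  (exists2 delta : R, 0 < delta &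
     (\int[P]_w ((ln (Nmat (g 0%N w))) `^ (2 + delta))%:E < +oo)%E) ->
  (* (A5) *)
  (exists2 kappa : R, 1 < kappa & {ae P, forall w, A5_mat kappa (g 0%N w)}) ->
  exists2 c : R, 0 < c &
    {ae P, forall w, forall (n : nat), (1 <= n)%N ->
       forall x x', simplex x -> simplex x' -> x <> x' ->
         `|Sn g n w x - Sn g n w x'| <= c * hilbert x x' /\
         `|minS g n w x - minS g n w x'| <= c * hilbert x x'}.
Proof.
move=> _ gm _ hid hall _ [k k1 hk].
have lk : 0 < ln k by apply: ln_gt0.
exists (4 + 3 * ln k); first lra.
pose E n := mx_event g n (fun _ _ => `[0, +oo[%classic).
have mE : forall n, measurable (E n).
  move=> n.
  have -> : E n = [set w | forall i, i \in enum 'I_d -> [set w | forall j, j \in enum 'I_d ->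
              ((fun w => g n w i j) @^-1` `[0, +oo[%classic) w] w].
    apply/seteqP; split=> w /=.
      by move=> H i _ j _; apply: H.
    by move=> H i j; apply: H; rewrite mem_enum.
  apply: meas_forall_seq => i; apply: meas_forall_seq => j.
  rewrite -[X in measurable X]setTI; apply: gm => //; exact: measurable_itv.
have mA : forall i j : 'I_d, measurable (`[0, +oo[%classic : set R).
  by move=> *; exact: measurable_itv.
have E0 : P (~` E 0%N) = 0%E.
  case: hall => N [mN PN sN].
  apply/eqP; rewrite -measure_le0 -PN; apply: le_measure; rewrite ?inE.
  - exact: measurableC.
  - exact: mN.
  move=> w /= hw; apply: sN => /= hal; apply: hw => i j /=.
  by rewrite in_itv /= andbT; case: hal => + _; apply.
have hnn : forall n, {ae P, forall w, E n w}.
  move=> n; exists (~` E n); split => //; first exact: measurableC.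
  by rewrite probability_setC // hid // -(probability_setC P (mE 0%N)).
have hall' := ae_foralln hnn.
apply: filterS2 hall' hk => w Hn HA n n1 x x' hx hx' _.
have gnn : forall k i j, 0 <= g k w i j.
  by move=> m i j; have := Hn m i j; rewrite /= in_itv /= andbT.
split; first exact: Sn_bound.
apply: minS_bound => j j1; exact: Sn_bound.
Qed.
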